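(* Let $\mathcal{C}$ be an $[n,k]_q$ MWS code with $k\ge 2$. Then $$n\ge\left\lceil\frac{q\,\theta_q(k-1)}{2}\right\rceil=\left\lceil\frac{q^{k+1}-q}{2(q-1)}\right\rceil=\left\lceil\tfrac12\left(q^k+q^{k-1}+\dots+q\right)\right\rceil.$$
   Context: An $[n,k]_q$ code is a $k$-dimensional subspace of $\mathbb{F}_q^n$, non-degenerate (no coordinate identically zero on the code). $\theta_q(k-1)=\frac{q^k-1}{q-1}$. The code is MWS if the set of its non-zero Hamming weights has cardinality $\theta_q(k-1)$. *)

(* Defs.v *)
From HB Require Import structures.
From mathcomp Require Import all_boot all_order all_algebra.
Set Implicit Arguments. Unset Strict Implicit. Unset Printing Implicit Defensive.
Import GRing.Theory.
Local Open Scope ring_scope.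

(* Codes over a finite field F with q = #|F| elements: a code is a subspace
   C : {vspace 'rV[F]_n}; it is an [n,k]_q code when \dim C = k. *)

Definition wt (F : finFieldType) (n : nat) (c : 'rV[F]_n) : nat :=
  #|[set i : 'I_n | c 0 i != 0]|.

Definition nondeg_code (F : finFieldType) (n : nat) (C : {vspace 'rV[F]_n}) : Prop :=
  forall i : 'I_n, exists2 c : 'rV[F]_n, c \in C & c 0 i != 0.

Definition nz_weights (F : finFieldType) (n : nat) (C : {vspace 'rV[F]_n}) : seq nat :=
  undup [seq wt c | c <- enum 'rV[F]_n & (c \in C) && (c != 0)].

Definition theta (q m : nat) : nat := ((q ^ m.+1 - 1) %/ (q - 1))%N.

Definition MWS (F : finFieldType) (n : nat) (C : {vspace 'rV[F]_n}) : Prop :=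
  size (nz_weights C) = theta #|F| (\dim C).-1.

(* Main.v *)
Require Import Defs.
From HB Require Import structures.
From mathcomp Require Import all_boot all_order all_algebra all_field zify.
From mathcomp Require Import all_field zify.
Import GRing.Theory.

Lemma uniq_sum_lb (b : nat) (s : seq nat) : uniq s -> all (fun x => x < b) s ->
  size s * (size s).-1 <= 2 * \sum_(x <- s) x.
Proof.
elim: b s => [|b IH] s us.
  by case: s us => //= x s _; rewrite ltn0.
move=> hall.
case bs: (b \in s); last first.
  apply: IH => //; apply/allP => x xs.
  have := allP hall x xs; rewrite ltnS leq_eqVlt; case: eqP => // ex.
  by move: bs; rewrite -ex xs.
have pe := perm_to_rem bs.
rewrite (perm_big _ pe) big_cons (perm_size pe) /=.
have ur : uniq (rem b s) by exact: rem_uniq.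
have hr : all (fun x => x < b) (rem b s).
  apply/allP => x xr.
  have xs : x \in s by exact: (mem_rem xr).
  have := allP hall x xs; rewrite ltnS leq_eqVlt; case: eqP => // ex.
  have : uniq (b :: rem b s) by rewrite -(perm_uniq pe).
  by case/andP => nb _; move: xr; rewrite ex (negbTE nb).
have := IH _ ur hr.
have : size (rem b s) <= b.
  have := uniq_leq_size (s2 := iota 0 b) ur; rewrite size_iota; apply => x xr.
  by rewrite mem_iota /= add0n; exact: (allP hr x xr).
set m := size (rem b s); set S := \sum_(x <- rem b s) x.
move=> h1 h2. nia.
Qed.

Lemma sum_if_seq (W : seq nat) (x g : nat) : uniq W -> x \in W ->
  \sum_(w <- W) (if x == w then g else 0) = g.
Proof.
move=> uW xW; rewrite -big_mkcond /=.
rewrite (eq_bigl (pred1 x)); last by move=> w; rewrite /= eq_sym.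
by rewrite -big_filter filter_pred1_uniq // big_seq1.
Qed.

Lemma arith q n X t T D th : 1 < q -> 0 < t -> th = 1 + q*t -> th = t + X ->
  n*(q*X - X) = (q-1)*T -> th*(th-1) <= 2*D -> D + T = th*n -> (q*th).+1 %/2 <= n.
Proof.
move=> q1 t0 e1 e2 e3 e4 e5.
have eT : T = n * X.
  apply/eqP; rewrite -(eqn_pmul2l (_ : 0 < q - 1)); last by lia.
  apply/eqP; rewrite -e3 -{2}(mul1n X) -mulnBl mulnA mulnC mulnA.
  by rewrite mulnC [X * n]mulnC.
have eD : D = n * t.
  move: e5; rewrite e2 eT mulnDl [t * n]mulnC [X * n]mulnC => /eqP.
  by rewrite eqn_add2r => /eqP.
have : th * q * t <= 2 * n * t.
  have -> : th * q * t = th * (th - 1) by rewrite {3}e1 add1n subn1 /= mulnA.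
  by rewrite -mulnA -eD.
rewrite leq_pmul2r // => h.
lia.
Qed.

Section Code.
Local Open Scope ring_scope.
Variables (F : finFieldType) (n : nat) (C : {vspace 'rV[F]_n}).

Lemma fiber_eq (i : 'I_n) (c0 : 'rV[F]_n) : c0 \in C -> c0 0 i != 0 -> forall a b : F,
  \sum_(c : 'rV[F]_n | (c \in C) && (c 0 i == a)) 1%N =
   \sum_(c : 'rV[F]_n | (c \in C) && (c 0 i == b)) 1%N.
Proof.
move=> hc0 nz a b.
pose d := ((a - b) / c0 0 i) *: c0.
have dC : d \in C by rewrite memvZ.
have d0 : d 0 i = a - b by rewrite mxE divfK.
rewrite (reindex_inj (addrI d)) /=.
apply: eq_bigl => c.
rewrite mxE d0.
have -> : (d + c \in C) = (c \in C).
  apply/idP/idP => h; last exact: memvD.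
  by rewrite -(addKr d c); apply: memvD => //; rewrite memvN.
congr (_ && _); move: (c 0 i) => x; apply/eqP/eqP => [h|->].
  by apply: (GRing.addrI (a - b)); rewrite h GRing.subrK.
by rewrite GRing.subrK.
Qed.

Lemma card_C : #|C| = (#|F| ^ \dim C)%N.
Proof. exact: card_vspace. Qed.

Lemma count_nz (i : 'I_n) : (exists2 c : 'rV[F]_n, c \in C & c 0 i != 0) ->
  \sum_(c : 'rV[F]_n | (c \in C) && (c 0 i != 0)) 1%N =
   (#|F| ^ \dim C - #|F| ^ (\dim C).-1)%N.
Proof.
case=> c0 hc0 nz.
set N0 := \sum_(c : 'rV[F]_n | (c \in C) && (c 0 i == 0)) 1%N.
have hC : #|C| = \sum_(c : 'rV[F]_n | c \in C) 1%N by rewrite sum1_card.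
have hC2 : (#|C| = #|F| * N0)%N.
  rewrite hC (partition_big (fun c : 'rV[F]_n => c 0 i) predT) //=.
  rewrite (eq_bigr (fun _ => N0)); last by move=> a _; rewrite /N0 (@fiber_eq i c0 hc0 nz a 0).
  by rewrite sum_nat_const cardE /= -cardE.
have dpos : (0 < \dim C)%N.
  rewrite lt0n dimv_eq0; apply/negP => /eqP d0.
  by move: hc0; rewrite d0 memv0 => /eqP c00; move: nz; rewrite c00 mxE eqxx.
have q0 : (0 < #|F|)%N := ltnW (finNzRing_gt1 F).
have hN0 : N0 = (#|F| ^ (\dim C).-1)%N.
  apply/eqP; rewrite -(eqn_pmul2l q0) -expnS prednK // -hC2 card_C //.
have := hC; rewrite (bigID (fun c : 'rV[F]_n => c 0 i == 0)) /= -/N0 card_C hN0.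
by move=> ->; rewrite addKn.
Qed.

End Code.

Lemma sum_const_seq (W : seq nat) (m : nat) : \sum_(w <- W) m = (size W * m)%N.
Proof. by rewrite big_const_seq count_predT iter_addn_0 mulnC. Qed.

Theorem mainTheorem10 (F : finFieldType) (n k : nat) (C : {vspace 'rV[F]_n}) :
  \dim C = k -> (2 <= k)%N -> nondeg_code C -> MWS C ->
  (((#|F| * theta #|F| k.-1).+1 %/ 2) <= n)%N.
Proof.
case: k => [|[|k']] //= dimC _ nd mws.
have q1 : (1 < #|F|)%N := finNzRing_gt1 F.
set q := #|F| in q1 mws *.
set P := fun c : 'rV[F]_n => (c \in C) && (c != 0%R).
set W := nz_weights C.
have uW : uniq W := undup_uniq _.
have WP : forall c, P c -> wt c \in W.
  move=> c Pc; rewrite mem_undup; apply: map_f.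
  by rewrite mem_filter mem_enum andbT.
have PW : forall w, w \in W -> exists2 c, P c & wt c = w.
  move=> w; rewrite mem_undup => /mapP [c]; rewrite mem_filter mem_enum andbT.
  by move=> Pc ->; exists c.
have wtn : forall c : 'rV[F]_n, (wt c <= n)%N.
  by move=> c; rewrite /wt; apply: leq_trans (max_card _) _; rewrite card_ord.
have q0 : (0 < q.-1)%N by rewrite -subn1 subn_gt0.
have eth : theta q k'.+1 = \sum_(i < k'.+2) q ^ i.
  by rewrite /theta !subn1 predn_exp mulKn.
have mws' : size W = \sum_(i < k'.+2) q ^ i by rewrite -eth; move: mws; rewrite /MWS dimC.
have splitW : forall G : 'rV[F]_n -> nat,
    \sum_(c | P c) G c = \sum_(w <- W) \sum_(c | P c && (wt c == w)) G c.
  move=> G; rewrite (eq_bigr (fun c => \sum_(w <- W) (if wt c == w then G c else 0))); last by move=> c Pc; rewrite sum_if_seq // WP.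
  rewrite exchange_big /=; apply: eq_bigr => w _; by rewrite [RHS]big_mkcondr.
have cardS : \sum_(c | P c) 1 = q ^ k'.+2 - 1.
  have hC : #|C| = \sum_(c | c \in C) 1 by rewrite sum1_card.
  rewrite (bigD1 0%R) /= ?mem0v // (@card_C _ _ C) dimC in hC.
  by rewrite hC add1n subn1.
have TW1 : \sum_(c | P c) wt c = n * (q ^ k'.+2 - q ^ k'.+1).
  rewrite (eq_bigr (fun c : 'rV[F]_n => \sum_(j < n) (c 0%R j != 0%R : nat))); last first.
    move=> c _; rewrite /wt -sum1_card big_mkcond /=; apply: eq_bigr => j _.
    by rewrite inE; case: (_ != _).
  rewrite exchange_big /=.
  rewrite (eq_bigr (fun _ => q ^ k'.+2 - q ^ k'.+1)); last first.
    move=> j _; have := @count_nz _ _ C j (nd j); rewrite dimC /= => <-.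
    rewrite big_mkcond [RHS]big_mkcond; apply: eq_bigr => c _; rewrite /P.
    case: (c \in C) => //=; case: eqP => [->|] /=; first by rewrite mxE eqxx.
    by case: (_ != _).
  by rewrite big_const_ord iter_addn_0 mulnC.
have wtZ : forall (a : F) (c : 'rV[F]_n), a != 0%R -> wt (a *: c)%R = wt c.
  move=> a c a0; rewrite /wt; apply: eq_card => j.
  by rewrite !inE mxE mulf_eq0 (negbTE a0).
have cntge : forall w, w \in W -> (q.-1 <= \sum_(c | P c && (wt c == w)) 1)%N.
  move=> w /PW [c Pc <-].
  have -> : \sum_(c' | P c' && (wt c' == wt c)) 1 = #|[set c' | P c' && (wt c' == wt c)]|.
    by rewrite -sum1_card; apply: eq_bigl => c'; rewrite inE.
  have /andP [cC cn0] := Pc.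
  rewrite /q -(cardsC1 (0 : F)%R) -(@card_in_imset _ _ (fun a : F => (a *: c)%R)); last first.
    move=> a b _ _ /eqP; rewrite -subr_eq0 -scalerBl scaler_eq0 (negbTE cn0) orbF subr_eq0.
    by move/eqP.
  apply: subset_leq_card; apply/subsetP => y /imsetP [a]; rewrite in_setC1 => a0 ->.
  by rewrite inE /P memvZ //= scaler_eq0 (negbTE a0) (negbTE cn0) /= wtZ.
have sumcnt : \sum_(w <- W) \sum_(c | P c && (wt c == w)) 1 = size W * q.-1.
  by rewrite -splitW cardS subn1 predn_exp mws' mulnC.
have cnteq : forall w, w \in W -> \sum_(c | P c && (wt c == w)) 1 = q.-1.
  have : \sum_(w <- W) \sum_(c | P c && (wt c == w)) 1 =
         \sum_(w <- W) (\sum_(c | P c && (wt c == w)) 1 - q.-1) + size W * q.-1.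
    rewrite -sum_const_seq -big_split /= big_seq [RHS]big_seq.
    by apply: eq_bigr => w wW; rewrite subnK // cntge.
  rewrite sumcnt => /eqP; rewrite -{1}[size W * _]add0n eqn_add2r eq_sym sum_nat_seq_eq0.
  move=> /allP h w wW; have := h w wW; rewrite /= subn_eq0 => h2.
  by apply/eqP; rewrite eqn_leq h2 cntge.
set T := \sum_(w <- W) w.
have TW2 : \sum_(c | P c) wt c = q.-1 * T.
  rewrite splitW /T big_distrr /= big_seq [RHS]big_seq; apply: eq_bigr => w wW.
  rewrite (eq_bigr (fun _ => w * 1)%N); last by move=> c /andP [_ /eqP ->]; rewrite muln1.
  by rewrite -big_distrr /= cnteq // mulnC.
set D := \sum_(w <- W) (n - w).
have hD : D + T = size W * n.
  rewrite /D /T -big_split -sum_const_seq big_seq [RHS]big_seq; apply: eq_bigr => w wW /=.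
  by rewrite subnK //; have [c _ <-] := PW w wW; exact: wtn.
have hU : (size W * (size W).-1 <= 2 * D)%N.
  have := @uniq_sum_lb n.+1 (map (fun w => n - w) W).
  rewrite size_map big_map; apply.
    rewrite map_inj_in_uniq // => x y xW yW.
    have [c1 _ e1] := PW x xW; have [c2 _ e2] := PW y yW.
    have := wtn c1; have := wtn c2; rewrite e1 e2; lia.
  by apply/allP => x /mapP [w _ ->]; rewrite ltnS leq_subr.
have sW : size W = theta q k'.+1 by rewrite mws' eth.
apply: (@arith q n (q ^ k'.+1) (\sum_(i < k'.+1) q ^ i) T D) => //.
- by rewrite big_ord_recl expn0 add1n.
- rewrite eth big_ord_recl expn0 big_distrr /=; congr (_ + _).
  by apply: eq_bigr => i _; rewrite /bump /= add1n expnS.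
- by rewrite eth big_ord_recr.
- by rewrite -expnS -TW1 TW2 subn1.
- by rewrite -sW subn1.
- by rewrite hD sW.
Qed.
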